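(* Assume $m_1=1$ and $q_j(t)=e^{tJ}a_j$, $j=1,\dots,n$, where $a_j\in\mathbb R^2$ satisfy $a_j=\sum_{k\ne j}m_k\frac{a_j-a_k}{\|a_j-a_k\|^{\alpha+1}}$. Let $\varepsilon\in(0,1)$, $\omega=\varepsilon^{-(\alpha+1)/2}$, and $\nu>0$ with $(\omega-1)/\nu=\mathfrak p\in\mathbb Z$. Let $x_j(\tau)=e^{-J\omega\tau/\nu}q_j(\tau/\nu)$, $y_j=x_1-x_j$, and let $h$ be defined by $h(x,\tau)=\varepsilon^{\alpha-1}\sum_{j=2}^n m_j\big[\phi_\alpha(\|y_j(\tau)+\varepsilon x\|)+\frac{y_j(\tau)}{\|y_j(\tau)\|^{\alpha+1}}\cdot\varepsilon x\big]$ if $\alpha>1$, and $h(x,\tau)=\sum_{j=2}^n m_j\big[-\log\frac{\|y_j(\tau)+\varepsilon x\|}{\|y_j(\tau)\|}+\frac{y_j(\tau)}{\|y_j(\tau)\|^2}\cdot\varepsilon x\big]$ if $\alpha=1$. Then $h(x,\tau)$ is $2\pi$-periodic in $\tau$, $\nabla_xh(x,\tau)=\mathcal O(\varepsilon^{\alpha+1})$, and $\nu/\omega=(1-\varepsilon^{(\alpha+1)/2})/\mathfrak p$.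
   Context: $n\ge2$, $\alpha\ge1$, masses $m_1,\dots,m_n>0$. $\phi_\alpha(\lambda)=\frac1{\alpha-1}\lambda^{1-\alpha}$ for $\alpha>1$, $\phi_1(\lambda)=-\log\lambda$. $J=\begin{pmatrix}0&1\\-1&0\end{pmatrix}$, $e^{J\theta}=\cos\theta\,I+\sin\theta\,J$, $\|\cdot\|$ the Euclidean norm. The estimate $\mathcal O(\varepsilon^{\alpha+1})$ is meant as $\varepsilon\to0$, uniformly in $\tau$ and in $x$ in bounded sets. *)

(* Defs.v *)
From Stdlib Require Import Reals Lra ZArith.
From Coquelicot Require Import Coquelicot.
Open Scope R_scope.

Definition vec := (R * R)%type.
Definition vadd (u v : vec) : vec := (fst u + fst v, snd u + snd v).
Definition vsub (u v : vec) : vec := (fst u - fst v, snd u - snd v).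
Definition vscal (c : R) (v : vec) : vec := (c * fst v, c * snd v).
Definition vdot (u v : vec) : R := fst u * fst v + snd u * snd v.
Definition enorm (v : vec) : R := sqrt (fst v ^ 2 + snd v ^ 2).

(* J = [[0,1],[-1,0]] acting on column vectors: J (a,b) = (b,-a). *)
Definition Jmul (v : vec) : vec := (snd v, - fst v).
(* e^{J theta} = cos theta I + sin theta J *)
Definition expJ (theta : R) (v : vec) : vec :=
  vadd (vscal (cos theta) v) (vscal (sin theta) (Jmul v)).

Definition vsum (f : nat -> vec) (lo hi : nat) : vec :=
  (sum_n_m (fun k => fst (f k)) lo hi, sum_n_m (fun k => snd (f k)) lo hi).

Definition phi (alpha lam : R) : R :=
  if Req_EM_T alpha 1 then - ln lam
  else / (alpha - 1) * Rpower lam (1 - alpha).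

Definition central_config (n : nat) (m : nat -> R) (a : nat -> vec) (alpha : R) : Prop :=
  forall j, (1 <= j <= n)%nat ->
    a j = vsum (fun k => if Nat.eqb k j then (0, 0)
                         else vscal (m k / Rpower (enorm (vsub (a j) (a k))) (alpha + 1))
                                    (vsub (a j) (a k))) 1 n.

Definition omega (eps alpha : R) : R := Rpower eps (- (alpha + 1) / 2).

Definition qq (a : nat -> vec) (j : nat) (t : R) : vec := expJ t (a j).

Definition xx (a : nat -> vec) (eps alpha nu : R) (j : nat) (tau : R) : vec :=
  expJ (- (omega eps alpha * tau / nu)) (qq a j (tau / nu)).

Definition yy (a : nat -> vec) (eps alpha nu : R) (j : nat) (tau : R) : vec :=
  vsub (xx a eps alpha nu 1 tau) (xx a eps alpha nu j tau).

Definition hh (n : nat) (m : nat -> R) (a : nat -> vec) (alpha eps nu : R)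
    (x : vec) (tau : R) : R :=
  if Req_EM_T alpha 1 then
    sum_n_m (fun j =>
      let y := yy a eps alpha nu j tau in
      m j * ( - ln (enorm (vadd y (vscal eps x)) / enorm y)
              + vdot (vscal (/ (enorm y ^ 2)) y) (vscal eps x))) 2 n
  else
    Rpower eps (alpha - 1) *
    sum_n_m (fun j =>
      let y := yy a eps alpha nu j tau in
      m j * ( phi alpha (enorm (vadd y (vscal eps x)))
              + vdot (vscal (/ Rpower (enorm y) (alpha + 1)) y) (vscal eps x))) 2 n.

(* Main.v *)
Require Import Defs.
From Stdlib Require Import Reals ZArith Lra Lia.
From Coquelicot Require Import Coquelicot.
Open Scope R_scope.

Lemma Rpower_pos x y : 0 < Rpower x y.
Proof. unfold Rpower; apply exp_pos. Qed.

Lemma Fdiff b d A1 u u' r : 1 <= b -> 0 < d -> Rabs (A1 - d) <= r -> r <= d/2 ->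
  Rabs (u - u') <= r -> Rabs u' <= A1 ->
  Rabs (u / Rpower d b - u' / Rpower A1 b) <= (1 + b * Rpower 3 (b-1)) / Rpower d b * r.
Proof.
intros Hb Hd HA Hr Hu Hu'.
assert (HA1 : d/2 <= A1 <= 3*d/2) by (apply Rabs_le_between' in HA; lra) .
assert (Hr0 : 0 <= r) by (pose proof (Rabs_pos (u-u')); lra).
destruct (MVT_abs (fun t => Rpower t b) (fun t => b * Rpower t (b-1)) d A1) as [c [Hc Hcr]].
{ intros c Hc. apply derivable_pt_lim_power.
  assert (d/2 <= Rmin d A1) by (apply Rmin_glb; lra). lra. }
assert (Hc1 : d/2 <= c <= 3*d/2).
{ assert (d/2 <= Rmin d A1) by (apply Rmin_glb; lra).
  assert (Rmax d A1 <= 3*d/2) by (apply Rmax_lub; lra). lra. }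
set (P := Rpower d b) in *. set (E := Rpower (d/2) (b-1)). set (E' := Rpower A1 (b-1)).
set (G := Rpower 3 (b-1)). set (Cc := Rpower c (b-1)) in *.
assert (HP : 0 < P) by apply Rpower_pos.
assert (HE : 0 < E) by apply Rpower_pos.
assert (HG : 0 < G) by apply Rpower_pos.
assert (HCc : 0 < Cc) by apply Rpower_pos.
assert (HEE : E <= E') by (apply Rle_Rpower_l; lra).
assert (HCG : Cc <= G * E).
{ unfold G, E. rewrite Rpower_mult_distr by lra. apply Rle_Rpower_l; lra. }
assert (HQ : Rpower A1 b = E' * A1).
{ unfold E'. rewrite <- (Rpower_1 A1) at 3 by lra. rewrite <- Rpower_plus. f_equal; ring. }
rewrite HQ in Hc |- *.
rewrite Rabs_mult, (Rabs_right b), (Rabs_right Cc) in Hc by lra.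
assert (HA1p : 0 < A1) by lra.
replace (u / P - u' / (E' * A1)) with ((u-u')/P + u' * (E'*A1 - P) / (P * E' * A1)) by (field; repeat split; lra).
eapply Rle_trans; [apply Rabs_triang|].
unfold Rdiv; rewrite !Rabs_mult, !Rabs_inv.
rewrite (Rabs_right P) by lra. rewrite (Rabs_right (P*E'*A1)) by (left; repeat apply Rmult_lt_0_compat; lra).
rewrite Hc.
assert (H1 : Rabs (u-u') * /P <= r * / P) by (apply Rmult_le_compat_r; [left; apply Rinv_0_lt_compat|]; lra).
assert (H2 : Rabs u' * (b * Cc * Rabs (A1 - d)) <= A1 * (b * (G*E) * r)).
{ apply Rmult_le_compat; try apply Rabs_pos; auto.
  - apply Rmult_le_pos; [nra| apply Rabs_pos].
  - apply Rmult_le_compat; try nra; apply Rabs_pos. }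
assert (H3 : A1 * (b * (G*E) * r) * / (P*E'*A1) <= b * G * r * / P).
{ replace (A1 * (b * (G*E) * r) * / (P*E'*A1)) with (b*G*r*/P * (E / E')) by (field; lra).
  rewrite <- (Rmult_1_r (b*G*r*/P)) at 2. apply Rmult_le_compat_l.
  - apply Rmult_le_pos; [|left; apply Rinv_0_lt_compat; lra]. apply Rmult_le_pos; [|lra]. nra.
  - apply Rmult_le_reg_r with E'; [lra| unfold Rdiv; rewrite Rmult_assoc, Rinv_l by lra; lra]. }
assert (H4 : Rabs u' * (b * Cc * Rabs (A1 - d)) * / (P*E'*A1) <= A1 * (b * (G*E) * r) * / (P*E'*A1)).
{ apply Rmult_le_compat_r; [left; apply Rinv_0_lt_compat; repeat apply Rmult_lt_0_compat; lra|auto]. }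
replace ((1 + b*G) * /P * r) with (r * /P + b*G*r*/P) by ring.
lra.
Qed.

Lemma sum_le_loc (f g : nat -> R) lo hi :
  (forall k, (lo <= k <= hi)%nat -> f k <= g k) -> sum_n_m f lo hi <= sum_n_m g lo hi.
Proof.
induction hi as [|hi IH]; intros H.
- destruct lo.
  + rewrite !sum_n_n. apply H; lia.
  + rewrite !sum_n_m_zero by lia. apply Rle_refl.
- destruct (le_lt_dec lo (S hi)).
  + destruct (Nat.eq_dec lo (S hi)).
    * subst. rewrite !sum_n_n. apply H; lia.
    * rewrite !sum_n_Sm by lia. change plus with Rplus.
      apply Rplus_le_compat; [apply IH; intros; apply H; lia| apply H; lia].
  + rewrite !sum_n_m_zero by lia. apply Rle_refl.
Qed.

Lemma is_derive_sum (f : nat -> R -> R) (df : nat -> R) lo hi x :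
  (forall k, (lo <= k <= hi)%nat -> is_derive (f k) x (df k)) ->
  is_derive (fun s => sum_n_m (fun k => f k s) lo hi) x (sum_n_m df lo hi).
Proof.
induction hi as [|hi IH]; intros H.
- destruct lo.
  + rewrite sum_n_n. apply (is_derive_ext (f 0%nat)); [intro s; rewrite sum_n_n; reflexivity|]. apply H; lia.
  + rewrite sum_n_m_zero by lia. apply (is_derive_ext (fun _ => 0)); [intro s; rewrite sum_n_m_zero by lia; reflexivity|].
    apply (is_derive_const (K:=R_AbsRing) (V:=R_NormedModule) 0 x).
- destruct (le_lt_dec lo (S hi)).
  + destruct (Nat.eq_dec lo (S hi)).
    * subst. rewrite sum_n_n. apply (is_derive_ext (f (S hi))); [intro s; rewrite sum_n_n; reflexivity|]. apply H; lia.
    * rewrite sum_n_Sm by lia.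
      apply (is_derive_ext (fun s => sum_n_m (fun k => f k s) lo hi + f (S hi) s)); [intro s; rewrite sum_n_Sm by lia; reflexivity|].
      apply (is_derive_plus (fun s => sum_n_m (fun k => f k s) lo hi) (f (S hi))).
      apply IH; intros; apply H; lia. apply H; lia.
  + rewrite sum_n_m_zero by lia. apply (is_derive_ext (fun _ => 0)); [intro s; rewrite sum_n_m_zero by lia; reflexivity|].
    apply (is_derive_const (K:=R_AbsRing) (V:=R_NormedModule) 0 x).
Qed.

Lemma Rabs_sum (f : nat -> R) lo hi : Rabs (sum_n_m f lo hi) <= sum_n_m (fun k => Rabs (f k)) lo hi.
Proof. exact (norm_sum_n_m f lo hi). Qed.

Lemma enorm_norm (v : vec) : enorm v = norm (v : R * R).
Proof.
destruct v as [v1 v2]. unfold enorm. simpl. unfold norm; simpl. unfold prod_norm; simpl.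
unfold norm; simpl. unfold abs; simpl. f_equal. rewrite !Rmult_1_r, <- !Rabs_mult, !Rabs_right by nra. reflexivity.
Qed.

Lemma enorm_triang u v : enorm (vadd u v) <= enorm u + enorm v.
Proof. rewrite !enorm_norm. apply (norm_triangle (u : R*R) v). Qed.

Lemma enorm_scal c v : enorm (vscal c v) = Rabs c * enorm v.
Proof. destruct v as [v1 v2]; unfold enorm, vscal; cbn [fst snd].
replace ((c*v1)^2 + (c*v2)^2) with (Rsqr c * (v1^2+v2^2)) by (unfold Rsqr; ring).
rewrite sqrt_mult_alt by apply Rle_0_sqr. rewrite sqrt_Rsqr_abs. reflexivity. Qed.

Lemma enorm_pos v : 0 <= enorm v.
Proof. apply sqrt_pos. Qed.

Lemma fst_le v : Rabs (fst v) <= enorm v.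
Proof. destruct v as [v1 v2]; unfold enorm; cbn [fst snd].
rewrite <- sqrt_Rsqr_abs. apply sqrt_le_1_alt. unfold Rsqr. nra. Qed.

Lemma snd_le v : Rabs (snd v) <= enorm v.
Proof. destruct v as [v1 v2]; unfold enorm; cbn [fst snd].
rewrite <- sqrt_Rsqr_abs. apply sqrt_le_1_alt. unfold Rsqr. nra. Qed.

Lemma enorm_le_abs g1 g2 : enorm (g1, g2) <= Rabs g1 + Rabs g2.
Proof.
unfold enorm; cbn [fst snd].
rewrite <- (sqrt_pow2 (Rabs g1 + Rabs g2)) by (pose proof (Rabs_pos g1); pose proof (Rabs_pos g2); lra).
apply sqrt_le_1_alt. rewrite <- (pow2_abs g1), <- (pow2_abs g2).
pose proof (Rabs_pos g1); pose proof (Rabs_pos g2). nra.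
Qed.

Lemma enorm_rev y z : Rabs (enorm (vadd y z) - enorm y) <= enorm z.
Proof.
apply Rabs_le. split.
- assert (enorm y <= enorm (vadd y z) + enorm (vscal (-1) z)).
  { replace y with (vadd (vadd y z) (vscal (-1) z)) at 1.
    apply enorm_triang. destruct y, z; unfold vadd, vscal; cbn; f_equal; ring. }
  rewrite enorm_scal in H. replace (Rabs (-1)) with 1 in H by (rewrite Rabs_left by lra; ring). lra.
- pose proof (enorm_triang y z). lra.
Qed.

Lemma enorm_pos_neq v : v <> (0,0) -> 0 < enorm v.
Proof.
intros H. destruct v as [v1 v2]. unfold enorm; cbn [fst snd].
apply sqrt_lt_R0.
destruct (Req_dec v1 0), (Req_dec v2 0); subst; try nra.
exfalso; apply H; reflexivity.
Qed.

Lemma expJ_comp s t v : expJ s (expJ t v) = expJ (s + t) v.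
Proof.
destruct v as [v1 v2]. unfold expJ, vadd, vscal, Jmul; cbn [fst snd].
rewrite cos_plus, sin_plus. f_equal; ring.
Qed.

Lemma expJ_sub t u v : vsub (expJ t u) (expJ t v) = expJ t (vsub u v).
Proof.
destruct u, v. unfold expJ, vadd, vsub, vscal, Jmul; cbn [fst snd]. f_equal; ring.
Qed.

Lemma expJ_norm t v : enorm (expJ t v) = enorm v.
Proof.
destruct v as [v1 v2]. unfold enorm, expJ, vadd, vscal, Jmul; cbn [fst snd].
f_equal. pose proof (sin2_cos2 t). unfold Rsqr in H. nra.
Qed.

Lemma yy_eq a eps al nu j tau :
  yy a eps al nu j tau = expJ (- (omega eps al * tau / nu) + tau / nu) (vsub (a 1%nat) (a j)).
Proof.
unfold yy, xx, qq. rewrite !expJ_comp, expJ_sub. reflexivity.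
Qed.

Lemma enorm_yy a eps al nu j tau : enorm (yy a eps al nu j tau) = enorm (vsub (a 1%nat) (a j)).
Proof. rewrite yy_eq, expJ_norm. reflexivity. Qed.

Lemma cos_Zper x k : cos (x + 2 * IZR k * PI) = cos x.
Proof.
destruct (Z_le_gt_dec 0 k).
- rewrite <- (Z2Nat.id k) by lia. rewrite <- INR_IZR_INZ. apply cos_period.
- replace k with (- Z.of_nat (Z.to_nat (- k)))%Z by lia.
  rewrite opp_IZR, <- INR_IZR_INZ.
  rewrite <- (cos_period (x + 2 * - INR (Z.to_nat (- k)) * PI) (Z.to_nat (-k))). f_equal; ring.
Qed.

Lemma sin_Zper x k : sin (x + 2 * IZR k * PI) = sin x.
Proof.
destruct (Z_le_gt_dec 0 k).
- rewrite <- (Z2Nat.id k) by lia. rewrite <- INR_IZR_INZ. apply sin_period.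
- replace k with (- Z.of_nat (Z.to_nat (- k)))%Z by lia.
  rewrite opp_IZR, <- INR_IZR_INZ.
  rewrite <- (sin_period (x + 2 * - INR (Z.to_nat (- k)) * PI) (Z.to_nat (-k))). f_equal; ring.
Qed.

Lemma yy_per a eps al nu (p : Z) j tau : 0 < nu -> (omega eps al - 1) / nu = IZR p ->
  yy a eps al nu j (tau + 2 * PI) = yy a eps al nu j tau.
Proof.
intros Hnu Hp. rewrite !yy_eq.
assert (E : forall t, - (omega eps al * t / nu) + t / nu = - (IZR p * t)).
{ intros t. rewrite <- Hp. field. lra. }
rewrite !E. replace (- (IZR p * (tau + 2 * PI))) with (- (IZR p * tau) + 2 * IZR (- p) * PI)
  by (rewrite opp_IZR; ring).
unfold expJ at 1. rewrite cos_Zper, sin_Zper. reflexivity.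
Qed.

Lemma TD_ne1 al eps u0 v m k k' s0 : al <> 1 ->
  0 < (u0+eps*s0)^2+v^2 ->
  is_derive (fun s => m * (/(al-1) * Rpower (sqrt((u0+eps*s)^2+v^2)) (1-al) + (k*(eps*s) + k'))) s0
   (m * (eps * (k - (u0+eps*s0) / Rpower (sqrt((u0+eps*s0)^2+v^2)) (al+1)))).
Proof.
intros Hal HQ.
assert (Hl : 0 < sqrt((u0+eps*s0)^2+v^2)) by (apply sqrt_lt_R0; lra).
assert (H : Rpower (sqrt((u0+eps*s0)^2+v^2)) (al+1) =
   sqrt((u0+eps*s0)^2+v^2) * sqrt((u0+eps*s0)^2+v^2) / Rpower (sqrt((u0+eps*s0)^2+v^2)) (1-al)).
{ assert (Hp: Rpower (sqrt((u0+eps*s0)^2+v^2)) (al+1) * Rpower (sqrt((u0+eps*s0)^2+v^2)) (1-al) = sqrt((u0+eps*s0)^2+v^2) * sqrt((u0+eps*s0)^2+v^2)).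
  { rewrite <- Rpower_plus. replace (al+1+(1-al)) with (INR 2) by (simpl; ring).
    rewrite Rpower_pow by lra. simpl; ring. }
  rewrite <- Hp. field. unfold Rpower. apply Rgt_not_eq, exp_pos. }
rewrite H.
unfold Rpower. auto_derive.
- split; [|split; auto]. nra. 
- replace ((u0 + eps * s0) * ((u0 + eps * s0) * 1) + v * (v * 1)) with ((u0+eps*s0)^2+v^2) by ring.
  set (L := sqrt _). set (E := exp _). assert (0 < E) by apply exp_pos.
  field. repeat split; try lra; unfold L; lra.
Qed.

Lemma TD_1 eps u0 v m k k' ny s0 : 0 < ny ->
  0 < (u0+eps*s0)^2+v^2 ->
  is_derive (fun s => m * (- ln (sqrt((u0+eps*s)^2+v^2) / ny) + (k*(eps*s) + k'))) s0
   (m * (eps * (k - (u0+eps*s0) / Rpower (sqrt((u0+eps*s0)^2+v^2)) (1+1)))).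
Proof.
intros Hny HQ.
assert (Hl : 0 < sqrt((u0+eps*s0)^2+v^2)) by (apply sqrt_lt_R0; lra).
replace (1+1) with (INR 2) by (simpl; ring). rewrite Rpower_pow by lra.
auto_derive.
- repeat split; try nra. apply Rdiv_lt_0_compat; auto. 
- replace ((u0 + eps * s0) * ((u0 + eps * s0) * 1) + v * (v * 1)) with ((u0+eps*s0)^2+v^2) by ring.
  set (L := sqrt _). field. unfold L; lra.
Qed.

Definition Tne1 (al eps mj : R) (y x : vec) : R :=
  mj * (phi al (enorm (vadd y (vscal eps x))) + vdot (vscal (/ Rpower (enorm y) (al + 1)) y) (vscal eps x)).
Definition T1 (eps mj : R) (y x : vec) : R :=
  mj * ( - ln (enorm (vadd y (vscal eps x)) / enorm y) + vdot (vscal (/ (enorm y ^ 2)) y) (vscal eps x)).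

Lemma hh_ne1 n m a al eps nu x tau : al <> 1 ->
  hh n m a al eps nu x tau = Rpower eps (al - 1) *
    sum_n_m (fun j => Tne1 al eps (m j) (yy a eps al nu j tau) x) 2 n.
Proof. intros H. unfold hh. destruct (Req_EM_T al 1); [contradiction|reflexivity]. Qed.

Lemma hh_1 n m a al eps nu x tau : al = 1 ->
  hh n m a al eps nu x tau = sum_n_m (fun j => T1 eps (m j) (yy a eps al nu j tau) x) 2 n.
Proof. intros H. unfold hh. destruct (Req_EM_T al 1); [reflexivity|contradiction]. Qed.

Lemma Qpos a b : 0 < sqrt (a^2 + b^2) -> 0 < a^2 + b^2.
Proof. intros H. destruct (Rle_lt_dec (a^2+b^2) 0); auto. rewrite sqrt_neg_0 in H; lra. Qed.

Lemma Tne1_d1 al eps mj y x1 x2 : al <> 1 -> 0 < enorm (vadd y (vscal eps (x1, x2))) ->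
  is_derive (fun s => Tne1 al eps mj y (s, x2)) x1
   (mj * (eps * (/ Rpower (enorm y) (al + 1) * fst y
     - fst (vadd y (vscal eps (x1, x2))) / Rpower (enorm (vadd y (vscal eps (x1, x2)))) (al + 1)))).
Proof.
intros Hal Hw. destruct y as [y1 y2]. unfold Tne1, phi, enorm, vadd, vscal, vdot in *; cbn [fst snd] in *.
destruct (Req_EM_T al 1); [contradiction|].
apply TD_ne1; auto. apply Qpos; auto.
Qed.

Lemma Tne1_d2 al eps mj y x1 x2 : al <> 1 -> 0 < enorm (vadd y (vscal eps (x1, x2))) ->
  is_derive (fun s => Tne1 al eps mj y (x1, s)) x2
   (mj * (eps * (/ Rpower (enorm y) (al + 1) * snd y
     - snd (vadd y (vscal eps (x1, x2))) / Rpower (enorm (vadd y (vscal eps (x1, x2)))) (al + 1)))).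
Proof.
intros Hal Hw. destruct y as [y1 y2]. unfold Tne1, phi, enorm, vadd, vscal, vdot in *; cbn [fst snd] in *.
destruct (Req_EM_T al 1); [contradiction|].
set (c := / Rpower (sqrt (y1 ^ 2 + y2 ^ 2)) (al + 1)).
assert (HQ : 0 < (y2 + eps*x2)^2 + (y1+eps*x1)^2) by (rewrite Rplus_comm; apply Qpos; auto).
pose proof (TD_ne1 al eps y2 (y1+eps*x1) mj (c*y2) (c*y1*(eps*x1)) x2 Hal HQ) as H.
rewrite (Rplus_comm ((y2 + eps * x2) ^ 2)) in H.
eapply is_derive_ext; [|exact H].
intros s; cbn beta. rewrite (Rplus_comm ((y2 + eps * s) ^ 2)). f_equal. f_equal. apply Rplus_comm.
Qed.

Lemma T1_d1 eps mj y x1 x2 : 0 < enorm y -> 0 < enorm (vadd y (vscal eps (x1, x2))) ->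
  is_derive (fun s => T1 eps mj y (s, x2)) x1
   (mj * (eps * (/ Rpower (enorm y) (1 + 1) * fst y
     - fst (vadd y (vscal eps (x1, x2))) / Rpower (enorm (vadd y (vscal eps (x1, x2)))) (1 + 1)))).
Proof.
intros Hy Hw. replace (Rpower (enorm y) (1+1)) with (enorm y ^ 2)
  by (replace (1+1) with (INR 2) by (simpl; ring); rewrite Rpower_pow; auto).
destruct y as [y1 y2]. unfold T1, enorm, vadd, vscal, vdot in *; cbn [fst snd] in *.
apply TD_1; auto. apply Qpos; auto.
Qed.

Lemma T1_d2 eps mj y x1 x2 : 0 < enorm y -> 0 < enorm (vadd y (vscal eps (x1, x2))) ->
  is_derive (fun s => T1 eps mj y (x1, s)) x2
   (mj * (eps * (/ Rpower (enorm y) (1 + 1) * snd y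
     - snd (vadd y (vscal eps (x1, x2))) / Rpower (enorm (vadd y (vscal eps (x1, x2)))) (1 + 1)))).
Proof.
intros Hy Hw. replace (Rpower (enorm y) (1+1)) with (enorm y ^ 2)
  by (replace (1+1) with (INR 2) by (simpl; ring); rewrite Rpower_pow; auto).
destruct y as [y1 y2]. unfold T1, enorm, vadd, vscal, vdot in *; cbn [fst snd] in *.
set (c := / (sqrt (y1 ^ 2 + y2 ^ 2)) ^ 2) in *.
set (ny := sqrt (y1 ^ 2 + y2 ^ 2)) in *.
assert (HQ : 0 < (y2 + eps*x2)^2 + (y1+eps*x1)^2) by (rewrite Rplus_comm; apply Qpos; auto).
pose proof (TD_1 eps y2 (y1+eps*x1) mj (c*y2) (c*y1*(eps*x1)) ny x2 Hy HQ) as H.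
rewrite (Rplus_comm ((y2 + eps * x2) ^ 2)) in H.
eapply is_derive_ext; [|exact H].
intros s; cbn beta. rewrite (Rplus_comm ((y2 + eps * s) ^ 2)). f_equal. f_equal. apply Rplus_comm.
Qed.

Lemma ratio_part eps al nu (p : Z) : 1 <= al -> 0 < eps < 1 -> 0 < nu ->
  (omega eps al - 1) / nu = IZR p ->
  nu / omega eps al = (1 - Rpower eps ((al + 1) / 2)) / IZR p.
Proof.
intros Hal He Hnu Hp.
assert (Hom : omega eps al = / Rpower eps ((al+1)/2)).
{ unfold omega. rewrite <- Rpower_Ropp. f_equal. field. }
assert (HE : Rpower eps ((al+1)/2) < 1).
{ unfold Rpower. apply Rlt_le_trans with (exp 0); [apply exp_increasing|rewrite exp_0; lra].
  assert (ln eps < 0) by (rewrite <- ln_1; apply ln_increasing; lra).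
  assert (0 < (al+1)/2) by lra. assert (0 < (al+1)/2 * - ln eps) by (apply Rmult_lt_0_compat; lra). lra. }
assert (HE0 : 0 < Rpower eps ((al+1)/2)) by apply Rpower_pos.
rewrite Hom in Hp |- *. rewrite <- Hp.
set (E := Rpower eps ((al+1)/2)) in *.
assert (1 < / E) by (rewrite <- Rinv_1; apply Rinv_lt_contravar; lra).
field. repeat split; lra.
Qed.

Lemma part1 n m a al eps nu (p : Z) : 1 <= al -> 0 < eps < 1 -> 0 < nu ->
  (omega eps al - 1) / nu = IZR p ->
  (forall (x : vec) (tau : R), hh n m a al eps nu x (tau + 2 * PI) = hh n m a al eps nu x tau)
  /\ nu / omega eps al = (1 - Rpower eps ((al + 1) / 2)) / IZR p.
Proof.
intros Hal He Hnu Hp. split; [|apply ratio_part; auto].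
intros x tau. unfold hh. destruct (Req_EM_T al 1).
- apply sum_n_m_ext; intros j. rewrite (yy_per a eps al nu p j tau Hnu Hp). reflexivity.
- f_equal. apply sum_n_m_ext; intros j. rewrite (yy_per a eps al nu p j tau Hnu Hp). reflexivity.
Qed.

Lemma delta_ex (g : nat -> R) N : (forall j, (2 <= j <= N)%nat -> 0 < g j) ->
  exists d, 0 < d /\ forall j, (2 <= j <= N)%nat -> d <= g j.
Proof.
induction N as [|N IH]; intros H.
- exists 1; split; [lra|]; intros; lia.
- destruct IH as [d [Hd Hj]]. { intros; apply H; lia. }
  destruct (le_lt_dec 2 (S N)).
  + exists (Rmin d (g (S N))). split. { apply Rmin_pos; auto; apply H; lia. }
    intros j Hj'. destruct (Nat.eq_dec j (S N)).
    * subst; apply Rmin_r.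
    * eapply Rle_trans; [apply Rmin_l| apply Hj; lia].
  + exists d; split; auto; intros; lia.
Qed.

Definition Kc (al d : R) : R := (1 + (al + 1) * Rpower 3 (al + 1 - 1)) / Rpower d (al + 1).

Lemma term_bound al eps Rb mj y w u u' : 1 <= al -> 0 < eps -> 0 <= mj -> 0 < enorm y ->
  Rabs (enorm w - enorm y) <= eps * Rb -> eps * Rb <= enorm y / 2 ->
  Rabs (u - u') <= eps * Rb -> Rabs u' <= enorm w ->
  Rabs (mj * (eps * (/ Rpower (enorm y) (al + 1) * u - u' / Rpower (enorm w) (al + 1))))
  <= mj * (eps * (Kc al (enorm y) * (eps * Rb))).
Proof.
intros Hal He Hm Hy H1 H2 H3 H4.
rewrite !Rabs_mult, (Rabs_right mj), (Rabs_right eps) by lra.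
apply Rmult_le_compat_l; auto. apply Rmult_le_compat_l; [lra|].
rewrite Rmult_comm. apply Fdiff; auto; lra.
Qed.

Theorem proposition4
  (n : nat) (m : nat -> R) (a : nat -> vec) (alpha : R)
  (Hn : (2 <= n)%nat) (Halpha : 1 <= alpha)
  (Hm : forall j, (1 <= j <= n)%nat -> 0 < m j) (Hm1 : m 1%nat = 1)
  (Hdist : forall j k, (1 <= j <= n)%nat -> (1 <= k <= n)%nat -> j <> k -> a j <> a k)
  (Hcc : central_config n m a alpha) :
  (forall (eps nu : R) (p : Z),
      0 < eps < 1 -> 0 < nu -> (omega eps alpha - 1) / nu = IZR p ->
      (forall (x : vec) (tau : R),
          hh n m a alpha eps nu x (tau + 2 * PI) = hh n m a alpha eps nu x tau)
      /\ nu / omega eps alpha = (1 - Rpower eps ((alpha + 1) / 2)) / IZR p)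
  /\
  (forall Rb : R, 0 < Rb ->
     exists C eps0 : R, 0 < eps0 /\
       forall (eps nu : R) (p : Z),
         0 < eps < 1 -> eps < eps0 -> 0 < nu -> (omega eps alpha - 1) / nu = IZR p ->
         forall (x : vec) (tau : R), enorm x <= Rb ->
           exists g1 g2 : R,
             is_derive (fun s => hh n m a alpha eps nu (s, snd x) tau) (fst x) g1 /\
             is_derive (fun s => hh n m a alpha eps nu (fst x, s) tau) (snd x) g2 /\
             enorm (g1, g2) <= C * Rpower eps (alpha + 1)).
Proof.
split.
{ intros eps nu p He Hnu Hp. apply part1; auto. }
intros Rb HRb.
set (d := fun j => enorm (vsub (a 1%nat) (a j))).
assert (Hdpos : forall j, (2 <= j <= n)%nat -> 0 < d j).
{ intros j Hj. unfold d. apply enorm_pos_neq. intro E.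
  apply (Hdist 1%nat j); try lia.
  destruct (a 1%nat) as [p1 p2], (a j) as [q1 q2]. unfold vsub in E; cbn [fst snd] in E.
  injection E; intros. f_equal; lra. }
destruct (delta_ex d n Hdpos) as [delta [Hdelta Hdj]].
set (S := sum_n_m (fun j => m j * Kc alpha (d j)) 2 n).
exists (2 * Rb * S), (delta / (2 * Rb)). split.
{ apply Rdiv_lt_0_compat; lra. }
intros eps nu p He He0 Hnu Hp [x1 x2] tau Hx. cbn [fst snd].
set (y := fun j => yy a eps alpha nu j tau).
set (w := fun j => vadd (y j) (vscal eps (x1, x2))).
assert (Hyd : forall j, enorm (y j) = d j) by (intros; unfold y, d; apply enorm_yy).
assert (HeR : eps * Rb <= delta / 2).
{ apply Rmult_lt_compat_r with (r := Rb) in He0; auto.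
  replace (delta / (2 * Rb) * Rb) with (delta / 2) in He0 by (field; lra). lra. }
assert (Hex : eps * enorm (x1, x2) <= eps * Rb) by (apply Rmult_le_compat_l; lra).
assert (Hrev : forall j, Rabs (enorm (w j) - enorm (y j)) <= eps * Rb).
{ intros j. unfold w. eapply Rle_trans; [apply enorm_rev|]. rewrite enorm_scal, Rabs_right by lra. lra. }
assert (Hwpos : forall j, (2 <= j <= n)%nat -> 0 < enorm (w j)).
{ intros j Hj. pose proof (Hrev j) as H. apply Rabs_le_between' in H.
  rewrite Hyd in H. pose proof (Hdj j Hj). lra. }
assert (Hypos : forall j, (2 <= j <= n)%nat -> 0 < enorm (y j)).
{ intros j Hj. rewrite Hyd. auto. }
exists (Rpower eps (alpha - 1) * sum_n_m (fun j => m j * (eps * (/ Rpower (enorm (y j)) (alpha + 1) * fst (y j)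
     - fst (w j) / Rpower (enorm (w j)) (alpha + 1)))) 2 n).
exists (Rpower eps (alpha - 1) * sum_n_m (fun j => m j * (eps * (/ Rpower (enorm (y j)) (alpha + 1) * snd (y j)
     - snd (w j) / Rpower (enorm (w j)) (alpha + 1)))) 2 n).
split; [|split].
- destruct (Req_dec alpha 1) as [E1|N1].
  + apply (is_derive_ext (fun s => sum_n_m (fun j => T1 eps (m j) (y j) (s, x2)) 2 n)).
    { intros s. rewrite hh_1 by auto. reflexivity. }
    rewrite E1, Rminus_diag, Rpower_O, Rmult_1_l by lra.
    apply (is_derive_sum (fun j s => T1 eps (m j) (y j) (s, x2))).
    intros k Hk. exact (T1_d1 eps (m k) (y k) x1 x2 (Hypos k Hk) (Hwpos k Hk)).
  + apply (is_derive_ext (fun s => Rpower eps (alpha - 1) * sum_n_m (fun j => Tne1 alpha eps (m j) (y j) (s, x2)) 2 n)).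
    { intros s. rewrite hh_ne1 by exact N1. reflexivity. }
    apply is_derive_scal.
    apply (is_derive_sum (fun j s => Tne1 alpha eps (m j) (y j) (s, x2))).
    intros k Hk. exact (Tne1_d1 alpha eps (m k) (y k) x1 x2 N1 (Hwpos k Hk)).
- destruct (Req_dec alpha 1) as [E2|N2].
  + apply (is_derive_ext (fun s => sum_n_m (fun j => T1 eps (m j) (y j) (x1, s)) 2 n)).
    { intros s. rewrite hh_1 by auto. reflexivity. }
    rewrite E2, Rminus_diag, Rpower_O, Rmult_1_l by lra.
    apply (is_derive_sum (fun j s => T1 eps (m j) (y j) (x1, s))).
    intros k Hk. exact (T1_d2 eps (m k) (y k) x1 x2 (Hypos k Hk) (Hwpos k Hk)).
  + apply (is_derive_ext (fun s => Rpower eps (alpha - 1) * sum_n_m (fun j => Tne1 alpha eps (m j) (y j) (x1, s)) 2 n)).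
    { intros s. rewrite hh_ne1 by exact N2. reflexivity. }
    apply is_derive_scal.
    apply (is_derive_sum (fun j s => Tne1 alpha eps (m j) (y j) (x1, s))).
    intros k Hk. exact (Tne1_d2 alpha eps (m k) (y k) x1 x2 N2 (Hwpos k Hk)).
- set (P := Rpower eps (alpha - 1)).
  assert (HP : 0 < P) by apply Rpower_pos.
  assert (HmS : sum_n_m (fun j => m j * (eps * (Kc alpha (d j) * (eps * Rb)))) 2 n = eps * (eps * Rb) * S).
  { unfold S. rewrite <- (sum_n_m_mult_l (K := R_Ring)). apply sum_n_m_ext; intros j.
    change mult with Rmult. simpl. ring. }
  assert (Hx1 : Rabs x1 <= enorm (x1, x2)) by exact (fst_le (x1, x2)).
  assert (Hx2 : Rabs x2 <= enorm (x1, x2)) by exact (snd_le (x1, x2)).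
  assert (Hb1 : Rabs (sum_n_m (fun j => m j * (eps * (/ Rpower (enorm (y j)) (alpha + 1) * fst (y j)
     - fst (w j) / Rpower (enorm (w j)) (alpha + 1)))) 2 n) <= eps * (eps * Rb) * S).
  { rewrite <- HmS. eapply Rle_trans; [apply Rabs_sum|]. apply sum_le_loc. intros k Hk.
    rewrite <- Hyd. apply term_bound; auto; try lra.
    + left; apply Hm; lia.
    + rewrite Hyd. pose proof (Hdj k Hk). lra.
    + unfold w, vadd, vscal; cbn [fst snd].
      replace (fst (y k) - (fst (y k) + eps * x1)) with (- (eps * x1)) by ring.
      rewrite Rabs_Ropp, Rabs_mult, (Rabs_right eps) by lra.
      eapply Rle_trans; [|exact Hex]. apply Rmult_le_compat_l; lra.
    + apply fst_le. }
  assert (Hb2 : Rabs (sum_n_m (fun j => m j * (eps * (/ Rpower (enorm (y j)) (alpha + 1) * snd (y j)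
     - snd (w j) / Rpower (enorm (w j)) (alpha + 1)))) 2 n) <= eps * (eps * Rb) * S).
  { rewrite <- HmS. eapply Rle_trans; [apply Rabs_sum|]. apply sum_le_loc. intros k Hk.
    rewrite <- Hyd. apply term_bound; auto; try lra.
    + left; apply Hm; lia.
    + rewrite Hyd. pose proof (Hdj k Hk). lra.
    + unfold w, vadd, vscal; cbn [fst snd].
      replace (snd (y k) - (snd (y k) + eps * x2)) with (- (eps * x2)) by ring.
      rewrite Rabs_Ropp, Rabs_mult, (Rabs_right eps) by lra.
      eapply Rle_trans; [|exact Hex]. apply Rmult_le_compat_l; lra.
    + apply snd_le. }
  eapply Rle_trans; [apply enorm_le_abs|].
  rewrite !Rabs_mult, (Rabs_right P) by lra.
  assert (HE : Rpower eps (alpha + 1) = P * eps * eps).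
  { unfold P. replace (alpha + 1) with ((alpha - 1) + 1 + 1) by ring. rewrite !Rpower_plus, Rpower_1 by lra. reflexivity. }
  rewrite HE.
  apply Rle_trans with (P * (eps * (eps * Rb) * S) + P * (eps * (eps * Rb) * S)).
  { apply Rplus_le_compat; apply Rmult_le_compat_l; lra. }
  right; ring.
Qed.
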